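(* Let $(R,\mathfrak m)$ be a zero-dimensional Gorenstein local ring and let $I\subseteq\mathfrak m$ be an ideal. Assume $I^r\ne0$ and $I^{r+1}=0$. Let $G=G(I)=\bigoplus_{i=0}^r G_i$ with $G_i=I^i/I^{i+1}$, and let $S=\operatorname{Soc}(G)=\bigoplus_{i=0}^r S_i$ be the socle of $G$ (annihilator of the unique maximal homogeneous ideal of $G$). The following are equivalent: (1) $G$ is a Gorenstein ring; (2) $S_i=0$ for $0\le i\le r-1$; (3) $0:_R I^{r-i}=I^{i+1}$ for $0\le i\le r-1$; (4) $0:_R I^{r-i}=I^{i+1}$ for $0\le i\le\lfloor\frac{r-1}{2}\rfloor$; (5) $\lambda(G_i)=\lambda(G_{r-i})$ for $0\le i\le\lfloor\frac{r-1}{2}\rfloor$; (6) $I^r:_R I^{r-i}=I^i$ for $1\le i\le r-1$, and $0:_R I=I^r$; (7) $I^{r-i}/I^r$ is a faithful module over $R/I^i$ for $1\le i\le r-1$, and $I$ is faithful over $R/I^r$.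
   Context: $\lambda$ denotes length; $\lfloor x\rfloor$ is the largest integer $\le x$; $G(I)$ is the associated graded ring of $I$. *)

(* Defs.v *)
From mathcomp Require Import all_boot all_algebra.
Set Implicit Arguments. Unset Strict Implicit. Unset Printing Implicit Defensive.
Import GRing.Theory.
Local Open Scope ring_scope.

Section Ideals.
Variable R : comUnitRingType.

Definition is_ideal (J : R -> Prop) : Prop :=
  J 0 /\ (forall x y, J x -> J y -> J (x + y)) /\ (forall a x, J x -> J (a * x)).

Definition subI (J K : R -> Prop) : Prop := forall x, J x -> K x.
Definition eqI (J K : R -> Prop) : Prop := forall x, J x <-> K x.

Definition zeroI : R -> Prop := fun x => x = 0.

Definition prodI (J K : R -> Prop) : R -> Prop := fun x =>
  exists s : seq (R * R), (forall p, p \in s -> J p.1 /\ K p.2) /\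
                          x = \sum_(p <- s) p.1 * p.2.

Fixpoint powI (J : R -> Prop) (n : nat) : R -> Prop :=
  match n with
  | 0 => fun _ => True
  | n.+1 => prodI (powI J n) J
  end.

Definition colon (J K : R -> Prop) : R -> Prop :=
  fun x => forall y, K y -> J (x * y).

Definition is_local (m : R -> Prop) : Prop :=
  is_ideal m /\ ~ m 1 /\ (forall x, ~ m x -> x \is a GRing.unit).

Definition noetherian : Prop :=
  forall c : nat -> R -> Prop, (forall n, is_ideal (c n)) ->
    (forall n, subI (c n) (c n.+1)) ->
    exists N, forall n, (N <= n)%N -> subI (c n) (c N).

Definition is_prime (P : R -> Prop) : Prop :=
  is_ideal P /\ ~ P 1 /\ (forall x y, P (x * y) -> P x \/ P y).

Definition dim0 (m : R -> Prop) : Prop :=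
  forall P, is_prime P -> eqI P m.

(* socle 0 :_R m is a simple R-module (submodules = ideals inside it) *)
Definition simple_socle (m : R -> Prop) : Prop :=
  (exists x, colon zeroI m x /\ x <> 0) /\
  (forall J, is_ideal J -> subI J (colon zeroI m) ->
     subI J zeroI \/ subI (colon zeroI m) J).

Definition Gorenstein0 (m : R -> Prop) : Prop :=
  is_local m /\ noetherian /\ dim0 m /\ simple_socle m.

(* R-submodules of B/A correspond to ideals between A and B *)
Definition is_chain (A B : R -> Prop) (n : nat) : Prop :=
  exists c : nat -> R -> Prop, (forall k, is_ideal (c k)) /\
    eqI (c 0%N) A /\ eqI (c n) B /\
    (forall k, (k < n)%N -> subI (c k) (c k.+1) /\ ~ subI (c k.+1) (c k)).

Definition has_length (A B : R -> Prop) (n : nat) : Prop :=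
  is_chain A B n /\ (forall k, is_chain A B k -> (k <= n)%N).

(* N/N' is a faithful module over R/J (J annihilates N/N'):
   an element x+J annihilating N/N' must be 0 in R/J *)
Definition faithful_over (J N N' : R -> Prop) : Prop :=
  forall x, (forall y, N y -> N' (x * y)) -> J x.

(* Elements of G are represented by sequences f with f j ∈ I^j, the
   degree-j component being the class of f j in I^j/I^(j+1); two
   representatives are equal in G iff every component difference lies in
   I^(j+1).  (Components of degree > r vanish automatically when I^(r+1)=0.) *)
Variables (m I : R -> Prop).

Definition Gel := nat -> R.
Definition inG (f : Gel) : Prop := forall j, powI I j (f j).
Definition geq (f g : Gel) : Prop := forall j, powI I j.+1 (f j - g j).
Definition Gzero : Gel := fun _ => 0.
Definition Gone : Gel := fun j => if j == 0%N then 1 else 0.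
Definition Gadd (f g : Gel) : Gel := fun j => f j + g j.
Definition Gmul (f g : Gel) : Gel :=
  fun k => \sum_(j < k.+1) f j * g (k - j)%N.

Definition Gideal (J : Gel -> Prop) : Prop :=
  (forall x, J x -> inG x) /\ J Gzero /\
  (forall x y, J x -> inG y -> geq x y -> J y) /\
  (forall x y, J x -> J y -> J (Gadd x y)) /\
  (forall a x, inG a -> J x -> J (Gmul a x)).

(* the unique maximal homogeneous ideal  m/I ⊕ G_1 ⊕ ... ⊕ G_r *)
Definition Gmax (f : Gel) : Prop := inG f /\ m (f 0%N).

Definition Gsoc (x : Gel) : Prop :=
  inG x /\ forall y, Gmax y -> geq (Gmul x y) Gzero.

Definition Ghomog (i : nat) (x : Gel) : Prop :=
  inG x /\ forall j, j <> i -> powI I j.+1 (x j).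

Definition Soc_deg_zero (i : nat) : Prop :=
  forall x, Gsoc x -> Ghomog i x -> geq x Gzero.

Definition G_local : Prop :=
  Gideal Gmax /\ ~ Gmax Gone /\
  forall f, inG f -> ~ Gmax f -> exists g, inG g /\ geq (Gmul f g) Gone.

Definition G_noetherian : Prop :=
  forall c : nat -> Gel -> Prop, (forall n, Gideal (c n)) ->
    (forall n x, c n x -> c n.+1 x) ->
    exists N, forall n x, (N <= n)%N -> c n x -> c N x.

Definition G_prime (P : Gel -> Prop) : Prop :=
  Gideal P /\ ~ P Gone /\
  (forall x y, inG x -> inG y -> P (Gmul x y) -> P x \/ P y).

Definition G_dim0 : Prop := forall P, G_prime P -> forall x, P x <-> Gmax x.

Definition G_simple_socle : Prop :=
  (exists x, Gsoc x /\ ~ geq x Gzero) /\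
  (forall N, Gideal N -> (forall x, N x -> Gsoc x) ->
     (forall x, N x -> geq x Gzero) \/ (forall x, Gsoc x -> N x)).

Definition G_Gorenstein : Prop :=
  G_local /\ G_noetherian /\ G_dim0 /\ G_simple_socle.

End Ideals.

(* Main.v *)
Require Import Defs.
From mathcomp Require Import all_boot all_algebra.
From Stdlib Require Import Classical ClassicalEpsilon Lia.
From mathcomp Require Import zify ring.
Set Implicit Arguments. Unset Strict Implicit. Unset Printing Implicit Defensive.
Import GRing.Theory.
Local Open Scope ring_scope.

Section IdealBasics.
Variable R : comUnitRingType.
Implicit Types J K A B : R -> Prop.

Lemma id0 J : is_ideal J -> J 0. Proof. by case. Qed.
Lemma idD J x y : is_ideal J -> J x -> J y -> J (x + y).
Proof. by case=> _ [H _]; apply: H. Qed.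
Lemma idM J a x : is_ideal J -> J x -> J (a * x).
Proof. by case=> _ [_ H]; apply: H. Qed.
Lemma idMr J a x : is_ideal J -> J x -> J (x * a).
Proof. by move=> iJ Jx; rewrite mulrC; apply: idM. Qed.
Lemma idN J x : is_ideal J -> J x -> J (- x).
Proof. by move=> iJ Jx; rewrite -mulN1r; apply: idM. Qed.
Lemma idB J x y : is_ideal J -> J x -> J y -> J (x - y).
Proof. by move=> iJ Jx Jy; apply: idD => //; apply: idN. Qed.
Lemma idB' J x y : is_ideal J -> J (x - y) -> J y -> J x.
Proof. by move=> iJ H Jy; have := idD iJ H Jy; rewrite subrK. Qed.

Lemma id_sum J (s : seq (R * R)) (F : R * R -> R) :
  is_ideal J -> (forall p, p \in s -> J (F p)) -> J (\sum_(p <- s) F p).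
Proof.
move=> iJ; elim: s => [|p s IH] H; first by rewrite big_nil; apply: id0.
rewrite big_cons; apply: idD => //; first by apply: H; rewrite inE eqxx.
by apply: IH => q qs; apply: H; rewrite inE qs orbT.
Qed.

Lemma ideal_True : is_ideal (fun _ : R => True). Proof. by []. Qed.
Lemma ideal_zero : is_ideal (@zeroI R).
Proof. rewrite /zeroI; split=> //; split=> [x y -> ->|a x ->]; by rewrite ?addr0 ?mulr0. Qed.

Lemma ideal_prodI J K : is_ideal J -> is_ideal K -> is_ideal (prodI J K).
Proof.
move=> iJ iK; split; first by exists [::]; rewrite big_nil.
split.
  move=> x y [s [Hs ->]] [t [Ht ->]]; exists (s ++ t); split; last by rewrite big_cat.
  by move=> p; rewrite mem_cat => /orP [] ?; [apply: Hs | apply: Ht].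
move=> a x [s [Hs ->]]; exists [seq (a * p.1, p.2) | p <- s]; split.
  move=> p /mapP [q qs ->] /=; have [] := Hs q qs; split => //; exact: idM.
by rewrite big_map mulr_sumr; apply: eq_bigr => p _; rewrite mulrA.
Qed.

Lemma prodI_mul J K x y : J x -> K y -> prodI J K (x * y).
Proof. by move=> Jx Ky; exists [:: (x, y)]; split; [move=> p; rewrite inE => /eqP -> | rewrite big_seq1]. Qed.

Lemma prodI_mono J J' K : (forall x, J x -> J' x) -> forall x, prodI J K x -> prodI J' K x.
Proof. by move=> H x [s [Hs ->]]; exists s; split => // p /Hs [] /H. Qed.

Lemma colon_ideal J K : is_ideal J -> is_ideal (colon J K).
Proof.
move=> iJ; split; first by move=> y _; rewrite mul0r; apply: id0.
split; first by move=> x y Hx Hy z Kz; rewrite mulrDl; apply: idD; [|apply: Hx|apply: Hy].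
by move=> a x Hx z Kz; rewrite -mulrA; apply: idM; [|apply: Hx].
Qed.

Variable I : R -> Prop.
Hypothesis iI : is_ideal I.

Lemma powI_ideal n : is_ideal (powI I n).
Proof. elim: n => [|n IH] //=; exact: ideal_prodI. Qed.

Lemma powI_mul a b x y : powI I a x -> powI I b y -> powI I (a + b) (x * y).
Proof.
elim: b y => [|b IH] y Ha Hb; first by rewrite addn0; apply: idMr => //; apply: powI_ideal.
move: Hb => /= [s [Hs ->]]; rewrite addnS /= mulr_sumr.
exists [seq (x * p.1, p.2) | p <- s]; split.
  by move=> p /mapP [q qs ->] /=; have [H1 H2] := Hs q qs; split => //; apply: IH.
by rewrite big_map; apply: eq_bigr => p _; rewrite mulrA.
Qed.

Lemma powI1 x : powI I 1 x <-> I x.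
Proof.
split; last by move=> Ix; rewrite -[x]mul1r; apply: prodI_mul.
move=> [s [Hs ->]]; apply: id_sum => // p ps; apply: idM => //; by case: (Hs p ps).
Qed.

Lemma powI_S n x : powI I n.+1 x -> powI I n x.
Proof.
elim: n x => [|n IH] x //= H.
apply: prodI_mono H => y; exact: IH.
Qed.

Lemma powI_le a b x : (a <= b)%N -> powI I b x -> powI I a x.
Proof.
move=> /subnK <-; elim: (b - a)%N x => [|k IH] x //= H.
by apply: IH; apply: powI_S.
Qed.

Lemma pow_step x c : (forall y, I y -> powI I c.+1 (x * y)) ->
  forall b y, powI I b.+1 y -> powI I (c.+1 + b) (x * y).
Proof.
move=> H; elim=> [|b IH] y.
  by move/powI1 => Iy; rewrite addn0; apply: H.
move=> /= [s [Hs ->]]; rewrite mulr_sumr addnS /=.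
exists [seq (x * p.1, p.2) | p <- s]; split.
  by move=> p /mapP [q qs ->] /=; have [H1 H2] := Hs q qs; split => //; apply: IH.
by rewrite big_map; apply: eq_bigr => p _; rewrite mulrA.
Qed.

Variable r : nat.
Hypothesis Ir1 : forall x, powI I r.+1 x <-> x = 0.

Lemma pow_big n x : (r < n)%N -> powI I n x -> x = 0.
Proof. by move=> rn H; apply/Ir1; apply: powI_le H. Qed.

End IdealBasics.

Section ACC.
Variable R : comUnitRingType.
Implicit Types J K A B : R -> Prop.
Hypothesis noeth : noetherian R.

Lemma acc_max (T : Type) (S : T -> Prop) (Q : T -> R -> Prop) :
  (forall c, is_ideal (Q c)) -> (exists c, S c) ->
  exists c0, S c0 /\ forall c, S c -> subI (Q c0) (Q c) -> subI (Q c) (Q c0).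
Proof.
move=> iQ [c1 Sc1]; apply: NNPP => Hn.
have Hx : forall x : {c | S c}, exists y : {c | S c},
    subI (Q (sval x)) (Q (sval y)) /\ ~ subI (Q (sval y)) (Q (sval x)).
  move=> [c Sc] /=; apply: NNPP => Hy; apply: Hn; exists c; split => // c' Sc' H1.
  apply: NNPP => H2; apply: Hy; by exists (exist _ c' Sc').
pose nxt x := sval (constructive_indefinite_description _ (Hx x)).
have nxtP x := svalP (constructive_indefinite_description _ (Hx x)).
pose s n := iter n nxt (exist _ c1 Sc1).
have [N HN] := @noeth (fun n => Q (sval (s n))) (fun n => iQ _)
   (fun n => (nxtP (s n)).1).
by apply: (nxtP (s N)).2; apply: (HN N.+1).
Qed.

Variable m : R -> Prop.
Hypothesis loc : is_local m.
Hypothesis d0 : dim0 m.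

Lemma mideal : is_ideal m. Proof. by case: loc. Qed.
Lemma m1 : ~ m 1. Proof. by case: loc => _ []. Qed.
Lemma munit x : ~ m x -> x \is a GRing.unit. Proof. by case: loc => _ [] _; apply. Qed.

Lemma socle_lemma K w : is_ideal K -> ~ K w ->
  exists c, ~ K (c * w) /\ forall a, m a -> K (a * (c * w)).
Proof.
move=> iK Kw.
have iQ : forall c, is_ideal (fun a => K (a * (c * w))).
  move=> c; split; first by rewrite mul0r; apply: id0.
  split; first by move=> x y Hx Hy; rewrite mulrDl; apply: idD.
  by move=> a x Hx; rewrite -mulrA; apply: idM.
have e1 : exists c, ~ K (c * w) by exists 1; rewrite mul1r.
have [c0 [S0 Hmax]] := @acc_max R (fun c => ~ K (c * w)) (fun c a => K (a * (c * w))) iQ e1.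
exists c0; split => // a ma.
suff Pr : is_prime (fun a => K (a * (c0 * w))) by apply/(d0 Pr).
split => //; split; first by rewrite mul1r.
move=> x y Hxy; case: (classic (K (x * (c0 * w)))) => Hx; first by left.
right.
have Sx : ~ K ((x * c0) * w) by rewrite -mulrA.
have Hsub : subI (fun a => K (a * (c0 * w))) (fun a => K (a * ((x * c0) * w))).
  by move=> z Hz /=; rewrite -mulrA mulrCA; apply: idM.
apply: (Hmax _ Sx Hsub) => /=.
by rewrite -mulrA mulrA [y * x]mulrC.
Qed.

End ACC.

Definition sb (P : Prop) : nat := if excluded_middle_informative P then 1%N else 0%N.
Lemma sbT (P : Prop) : P -> sb P = 1%N.
Proof. by rewrite /sb; case: excluded_middle_informative. Qed.
Lemma sbF (P : Prop) : ~ P -> sb P = 0%N.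
Proof. by rewrite /sb; case: excluded_middle_informative. Qed.
Lemma sb_iff (P Q : Prop) : (P <-> Q) -> sb P = sb Q.
Proof. by move=> [H1 H2]; case: (classic P) => HP; [rewrite !sbT // ; apply: H1 | rewrite !sbF // => /H2]. Qed.
Lemma sb_le1 (P : Prop) : (sb P <= 1)%N.
Proof. by rewrite /sb; case: excluded_middle_informative. Qed.

Section Count.
Variable R : comUnitRingType.
Implicit Types J K A B : R -> Prop.
Implicit Types d e : nat -> R -> Prop.

Definition strict d k := ~ subI (d k.+1) (d k).
Definition cnt d L := (\sum_(k < L) sb (strict d k))%N.
Definition mono d L := forall k, (k < L)%N -> subI (d k) (d k.+1).
Definition ideals d := forall k, is_ideal (d k).
Definition capI A B : R -> Prop := fun x => A x /\ B x.
Definition sumI A B : R -> Prop := fun x => exists a b, A a /\ B b /\ x = a + b.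

Lemma cnt0 d : cnt d 0 = 0%N. Proof. by rewrite /cnt big_ord0. Qed.
Lemma cntS d L : cnt d L.+1 = (cnt d L + sb (strict d L))%N.
Proof. by rewrite /cnt big_ord_recr. Qed.

Lemma cnt_ext d d' L : (forall k, eqI (d k) (d' k)) -> cnt d L = cnt d' L.
Proof.
move=> H; apply: eq_bigr => k _; apply: sb_iff; rewrite /strict /subI.
split => H1 H2; apply: H1 => x Hx.
  by apply/H; apply: H2; apply/H.
by apply/H; apply: H2; apply/H.
Qed.

Lemma capI_ideal A B : is_ideal A -> is_ideal B -> is_ideal (capI A B).
Proof.
move=> iA iB; split; first by split; apply: id0.
split; first by move=> x y [] ? ? [] ? ?; split; apply: idD.
by move=> a x [] ? ?; split; apply: idM.
Qed.

Lemma sumI_ideal A B : is_ideal A -> is_ideal B -> is_ideal (sumI A B).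
Proof.
move=> iA iB; split; first by exists 0, 0; rewrite addr0; split; [apply: id0|split; [apply: id0|]].
split.
  move=> x y [a [b [Aa [Bb ->]]]] [a' [b' [Aa' [Bb' ->]]]]; exists (a + a'), (b + b').
  by split; [apply: idD|split; [apply: idD|]] => //; rewrite addrACA.
move=> c x [a [b [Aa [Bb ->]]]]; exists (c * a), (c * b).
by split; [apply: idM|split; [apply: idM|]] => //; rewrite mulrDr.
Qed.

Lemma sumI_l A B x : is_ideal B -> A x -> sumI A B x.
Proof. by move=> iB Ax; exists x, 0; rewrite addr0; split => //; split => //; apply: id0. Qed.
Lemma sumI_r A B x : is_ideal A -> B x -> sumI A B x.
Proof. by move=> iA Bx; exists 0, x; rewrite add0r; split => //; apply: id0. Qed.

Lemma cnt_split d L B : ideals d -> mono d L -> is_ideal B ->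
  (cnt d L <= cnt (fun k => capI (d k) B) L + cnt (fun k => sumI (d k) B) L)%N.
Proof.
move=> id md iB; rewrite /cnt -big_split /=; apply: leq_sum => [[k kL]] _ /=.
case: (classic (strict d k)) => Hs; last by rewrite sbF.
rewrite sbT //.
case: (classic (strict (fun k => capI (d k) B) k)) => H1; first by rewrite (sbT H1).
case: (classic (strict (fun k => sumI (d k) B) k)) => H2; first by rewrite (sbT H2) addn1.
exfalso; apply: Hs => x Hx.
have S2 : subI (sumI (d k.+1) B) (sumI (d k) B) by apply: NNPP.
have S1 : subI (capI (d k.+1) B) (capI (d k) B) by apply: NNPP.
have [a [b [Aa [Bb E]]]] := S2 x (sumI_l iB Hx).
have Hb : d k.+1 b.
  have -> : b = x - a by rewrite E addrC addKr.
  by apply: idB => //; apply: (md k kL).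
have [Hb' _] := S1 b (conj Hb Bb).
by rewrite E; apply: idD.
Qed.
End Count.

Section Chains.
Variable R : comUnitRingType.
Implicit Types J K A B : R -> Prop.
Implicit Types d e : nat -> R -> Prop.

Lemma chain_ext A B A' B' n : is_chain A B n -> eqI A A' -> eqI B B' -> is_chain A' B' n.
Proof.
move=> [c [ic [c0 [cn H]]]] EA EB; exists c; split => //; split; last split => //.
  by move=> x; split => [/c0/EA|/EA/c0].
by move=> x; split => [/cn/EB|/EB/cn].
Qed.

Lemma chain_cnt n (c : nat -> R -> Prop) : (forall k, (k < n)%N -> subI (c k) (c k.+1) /\ ~ subI (c k.+1) (c k)) ->
  cnt c n = n /\ mono c n.
Proof.
move=> H; split; last by move=> k /H [].
rewrite /cnt (eq_bigr (fun _ => 1%N)); first by rewrite sum1_card card_ord.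
by move=> [k kn] _; rewrite sbT //; case: (H k kn).
Qed.

Lemma compress d L : ideals d -> mono d L -> is_chain (d 0%N) (d L) (cnt d L).
Proof.
move=> id; elim: L => [|L IH] mL.
  by rewrite cnt0; exists d; split => //; split => //; split => // k.
have mL' : mono d L by move=> k kL; apply: mL; apply: ltnW.
have [c [ic [c0 [cL Hc]]]] := IH mL'.
rewrite cntS; case: (classic (strict d L)) => Hs.
  rewrite (sbT Hs) addn1.
  set s := cnt d L in cL Hc *.
  exists (fun k => if k == s.+1 then d L.+1 else c k); split.
    by move=> k; case: ifP.
  split; first by rewrite /=.
  split; first by rewrite eqxx.
  move=> k ks; rewrite (ltn_eqF ks).
  case: (ltnP k s) => ks'.
    by rewrite (@ltn_eqF k.+1 s.+1 ks'); apply: Hc.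
  have -> : k = s by apply/eqP; rewrite eqn_leq ks'; rewrite -ltnS ks.
  rewrite eqxx; split.
    by move=> x /cL Hx; apply: mL.
  by move=> H; apply: Hs => x /H /cL.
rewrite (sbF Hs) addn0; exists c; split => //; split => //; split => //.
have H1 : subI (d L.+1) (d L) by apply: NNPP.
move=> x; split => [/cL Hx|Hx]; first by apply: mL.
by apply/cL; apply: H1.
Qed.

Lemma cnt_two e L B' B : mono e L ->
  (forall k, (k <= L)%N -> subI B' (e k) /\ subI (e k) B /\ (subI (e k) B' \/ subI B (e k))) ->
  (cnt e L <= 1)%N.
Proof.
move=> me H.
suff : (cnt e L <= sb (~ subI (e L) B'))%N by move/leq_trans; apply; apply: sb_le1.
elim: L me H => [|L IH] me H; first by rewrite cnt0.
have me' : mono e L by move=> k kL; apply: me; apply: ltnW.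
have H' : forall k, (k <= L)%N -> subI B' (e k) /\ subI (e k) B /\ (subI (e k) B' \/ subI B (e k)).
  by move=> k kL; apply: H; apply: leqW.
have IH' := IH me' H'.
rewrite cntS; case: (classic (strict e L)) => Hs.
  have HL : subI (e L) B'.
    case: (H' L (leqnn _)) => _ [_ [] // HB]; exfalso; apply: Hs => x /(H L.+1 (leqnn _)).2.1.
    exact: HB.
  have E0 : sb (~ subI (e L) B') = 0%N by rewrite sbF // => Hn; apply: Hn HL.
  rewrite E0 leqn0 in IH'; rewrite (eqP IH') add0n (sbT Hs) sbT //.
  by move=> HL1; apply: Hs => x /HL1 /((H' L (leqnn _)).1).
rewrite (sbF Hs) addn0; apply: (leq_trans IH'); rewrite leq_eqVlt; apply/orP; left; apply/eqP.
have H1 : subI (e L.+1) (e L) by apply: NNPP.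
apply: sb_iff; split => Hn Hsub; apply: Hn => x Hx.
  by apply: Hsub; apply: me.
by apply: Hsub; apply: H1.
Qed.

End Chains.

Lemma max_nat (P : nat -> Prop) M : (exists n, P n) -> (forall n, P n -> (n <= M)%N) ->
  exists n, P n /\ forall k, P k -> (k <= n)%N.
Proof.
elim: M => [|M IH] [n Pn] HM.
  by exists n; split => // k /HM; rewrite leqn0 => /eqP ->.
case: (classic (P M.+1)) => HP; first by exists M.+1; split.
apply: IH; first by exists n.
move=> k Pk; have := HM k Pk; rewrite leq_eqVlt => /orP [/eqP Ek|//].
by rewrite Ek in Pk.
Qed.

Section Span.
Variable R : comUnitRingType.
Implicit Types J K A B C : R -> Prop.
Implicit Types d e : nat -> R -> Prop.

Definition addx J (x : R) : R -> Prop := fun y => exists a c, J a /\ y = a + c * x.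
Fixpoint spanI A (xs : seq R) : R -> Prop :=
  match xs with [::] => A | x :: xs' => addx (spanI A xs') x end.

Lemma addx_ideal J x : is_ideal J -> is_ideal (addx J x).
Proof.
move=> iJ; split; first by exists 0, 0; rewrite mul0r addr0; split => //; apply: id0.
split.
  move=> y z [a [c [Ja ->]]] [a' [c' [Ja' ->]]]; exists (a + a'), (c + c'); split; first exact: idD.
  by rewrite mulrDl addrACA.
move=> b y [a [c [Ja ->]]]; exists (b * a), (b * c); split; first exact: idM.
by rewrite mulrDr mulrA.
Qed.
Lemma addx_sub J x y : J y -> addx J x y.
Proof. by move=> Jy; exists y, 0; rewrite mul0r addr0. Qed.
Lemma addx_x J x : is_ideal J -> addx J x x.
Proof. by move=> iJ; exists 0, 1; rewrite mul1r add0r; split => //; apply: id0. Qed.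

Lemma spanI_ideal A xs : is_ideal A -> is_ideal (spanI A xs).
Proof. by move=> iA; elim: xs => [|x xs IH] //=; apply: addx_ideal. Qed.
Lemma spanI_sub A xs y : A y -> spanI A xs y.
Proof. by elim: xs => [|x xs IH] //= Ay; apply: addx_sub; apply: IH. Qed.
Lemma spanI_le A B xs : is_ideal B -> subI A B -> (forall x, x \in xs -> B x) -> subI (spanI A xs) B.
Proof.
move=> iB AB; elim: xs => [|x xs IH] //= Hx y [a [c [Ha ->]]].
apply: idD => //; first by apply: IH => // z zs; apply: Hx; rewrite inE zs orbT.
by apply: idM => //; apply: Hx; rewrite inE eqxx.
Qed.

Variable m : R -> Prop.
Hypothesis noeth : noetherian R.
Hypothesis loc : is_local m.
Hypothesis d0 : dim0 m.

Lemma one_gen C B' x : is_ideal C -> is_ideal B' -> subI B' C -> subI C (addx B' x) ->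
  (forall a, m a -> B' (a * x)) -> subI C B' \/ subI (addx B' x) C.
Proof.
move=> iC iB BC CA Hm; case: (classic (subI C B')) => H; first by left.
right; have [y [Cy nBy]] : exists y, C y /\ ~ B' y.
  by apply: NNPP => Hn; apply: H => y Cy; apply: NNPP => nB; apply: Hn; exists y.
have [b [c [Bb Ey]]] := CA y Cy.
have nmc : ~ m c by move=> mc; apply: nBy; rewrite Ey; apply: idD => //; apply: Hm.
have uc := munit loc nmc.
have Cx : C x.
  have -> : x = c^-1 * (y - b) by rewrite Ey addrC addKr mulrA mulVr ?mul1r.
  by apply: idM => //; apply: idB => //; apply: BC.
move=> z [a [c' [Ba ->]]]; apply: idD => //; first by apply: BC.
by apply: idM.
Qed.

Lemma gen_bound xs : forall A e L, is_ideal A -> (forall x, x \in xs -> forall a, m a -> A (a * x)) ->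
  ideals e -> mono e L -> (forall k, (k <= L)%N -> subI A (e k) /\ subI (e k) (spanI A xs)) ->
  (cnt e L <= size xs)%N.
Proof.
elim: xs => [|x xs IH] A e L iA Hx ie me H.
  rewrite /cnt big1 // => [[k kL]] _; rewrite sbF // => Hs; apply: Hs => y Hy.
  by apply: (H k (ltnW kL)).1; apply: (H k.+1 kL).2.
set B' := spanI A xs.
have iB' : is_ideal B' by apply: spanI_ideal.
apply: (leq_trans (cnt_split ie me iB')); rewrite /= -addn1; apply: leq_add.
  apply: (IH A) => //.
  - by move=> z zs; apply: Hx; rewrite inE zs orbT.
  - by move=> k; apply: capI_ideal.
  - by move=> k kL y [Hy By]; split => //; apply: me.
  move=> k kL; split; first by move=> y Ay; split; [apply: (H k kL).1|apply: spanI_sub].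
  by move=> y [].
apply: (cnt_two (B' := B') (B := addx B' x)).
  by move=> k kL y [a [b [Ha [Hb ->]]]]; exists a, b; split => //; apply: me.
move=> k kL.
have iS : is_ideal (sumI (e k) B') by apply: sumI_ideal.
have Sle : subI (sumI (e k) B') (addx B' x).
  move=> y [a [b [Ha [Hb ->]]]]; apply: idD; [exact: addx_ideal| |exact: addx_sub].
  by apply: (H k kL).2.
split; first by move=> y; apply: sumI_r.
split => //.
apply: one_gen => //; first by move=> y; apply: sumI_r.
move=> a ma; apply: spanI_sub; apply: Hx => //; rewrite inE eqxx.
by []. Qed.

Fixpoint loewy (t : nat) : R -> Prop :=
  match t with 0 => @zeroI R | t.+1 => colon (loewy t) m end.

Lemma loewy_ideal t : is_ideal (loewy t).
Proof. elim: t => [|t IH] /=; [exact: ideal_zero | exact: colon_ideal]. Qed.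

Lemma loewy_mono t : subI (loewy t) (loewy t.+1).
Proof.
elim: t => [|t IH] x /=; first by rewrite /zeroI => -> y _; rewrite mul0r.
by move=> Hx y my; apply: IH; apply: Hx.
Qed.

Lemma loewy_full : exists N, forall x, loewy N x.
Proof.
have [N HN] := @noeth loewy loewy_ideal loewy_mono.
exists N => w; apply: NNPP => nw.
have [c [nz Hz]] := socle_lemma noeth d0 (loewy_ideal N) nw.
apply: nz; apply: (HN N.+1 (leqnSn _)) => /= y my.
by rewrite mulrC; apply: Hz.
Qed.

Lemma fg A B : is_ideal A -> is_ideal B -> subI A B ->
  exists xs, (forall x, x \in xs -> B x) /\ subI B (spanI A xs).
Proof.
move=> iA iB AB; apply: NNPP => Hn.
have Hx : forall xs : {xs : seq R | forall x, x \in xs -> B x},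
    exists y, B y /\ ~ spanI A (sval xs) y.
  move=> [xs Hxs] /=; apply: NNPP => Hy; apply: Hn; exists xs; split => // y By.
  by apply: NNPP => ns; apply: Hy; exists y.
pose nxt xs := sval (constructive_indefinite_description _ (Hx xs)).
have nxtP xs := svalP (constructive_indefinite_description _ (Hx xs)).
have Hnx : forall xs : {xs : seq R | forall x, x \in xs -> B x},
    forall x, x \in nxt xs :: sval xs -> B x.
  move=> xs x; rewrite inE => /orP [/eqP ->|]; first by case: (nxtP xs).
  by apply: (svalP xs).
pose step xs := exist (fun s => forall x, x \in s -> B x) _ (Hnx xs).
pose s n := iter n step (exist (fun s => forall x, x \in s -> B x) [::] (fun x (H : x \in [::]) => False_ind _ (notF H))).
have [N HN] := @noeth (fun n => spanI A (sval (s n))) (fun n => spanI_ideal _ iA)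
   (fun n y Hy => addx_sub _ Hy).
have := HN N.+1 (leqnSn _) (nxt (s N)) (addx_x _ (spanI_ideal _ iA)).
by case: (nxtP (s N)).
Qed.

End Span.

Section Lengths.
Variable R : comUnitRingType.
Implicit Types J K A B C X Y : R -> Prop.
Implicit Types d e : nat -> R -> Prop.
Variable m : R -> Prop.
Hypothesis noeth : noetherian R.
Hypothesis loc : is_local m.
Hypothesis d0 : dim0 m.

Lemma cnt_bound : exists M, forall d L, ideals d -> mono d L -> (cnt d L <= M)%N.
Proof.
have [N HN] := loewy_full noeth d0.
have FG t : exists xs, (forall x, x \in xs -> loewy m t.+1 x) /\ subI (loewy m t.+1) (spanI (loewy m t) xs).
  exact: (fg noeth (loewy_ideal m t) (loewy_ideal m t.+1) (@loewy_mono _ m t)).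
pose gens t := sval (constructive_indefinite_description _ (FG t)).
have gensP t := svalP (constructive_indefinite_description _ (FG t)).
exists (\sum_(t < N) size (gens t))%N => d L id md.
suff H : forall T, (cnt (fun k => capI (d k) (loewy m T)) L <= \sum_(t < T) size (gens t))%N.
  rewrite (@cnt_ext _ d (fun k => capI (d k) (loewy m N))); first exact: H.
  by move=> k x; split => [Hx|[]//]; split.
elim => [|T IH].
  rewrite big_ord0 leqn0 /cnt; apply/eqP; apply: big1 => k _; rewrite sbF // => Hs.
  by apply: Hs => x [_ /= Hx]; rewrite /zeroI in Hx; rewrite Hx; split => //; apply: id0.
rewrite big_ord_recr /=.
have iT := loewy_ideal m T.
have idT : ideals (fun k => capI (d k) (loewy m T.+1)).
  by move=> k; apply: capI_ideal => //; apply: loewy_ideal.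
have mdT : mono (fun k => capI (d k) (loewy m T.+1)) L.
  by move=> k kL x [Hx Hx']; split => //; apply: md.
apply: (leq_trans (cnt_split idT mdT iT)); apply: leq_add.
  rewrite (@cnt_ext _ _ (fun k => capI (d k) (loewy m T))) //.
  move=> k x; split; first by move=> [[]].
  by move=> [H1 H2]; split => //; split => //; apply: loewy_mono.
apply: (gen_bound loc (A := loewy m T)) => //.
- move=> x xs a ma; have := (gensP T).1 x xs => /= Hx.
  by rewrite mulrC; apply: Hx.
- by move=> k; apply: sumI_ideal.
- by move=> k kL y [a [b [Ha [Hb ->]]]]; exists a, b; split => //; apply: mdT.
move=> k kL; split; first by move=> y; apply: sumI_r.
move=> y [a [b [[_ Ha] [Hb ->]]]]; apply: idD; first exact: spanI_ideal.
  by apply: (gensP T).2.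
by apply: spanI_sub.
Qed.

Lemma chain_bound : exists M, forall A B n, is_chain A B n -> (n <= M)%N.
Proof.
have [M HM] := cnt_bound; exists M => A B n [c [ic [_ [_ Hc]]]].
have [E mc] := chain_cnt Hc.
by rewrite -E; apply: HM.
Qed.

Lemma step_ext X Y (X' Y' : R -> Prop) : eqI X X' -> eqI Y Y' ->
  subI X Y /\ ~ subI Y X -> subI X' Y' /\ ~ subI Y' X'.
Proof.
move=> EX EY [H1 H2]; split; first by move=> x /EX /H1 /EY.
by move=> H; apply: H2 => x /EY /H /EX.
Qed.

Lemma chain_refl A : is_ideal A -> is_chain A A 0.
Proof. by move=> iA; exists (fun _ => A); split => //; split => //; split => //. Qed.

Lemma chain_one A B : is_ideal A -> is_ideal B -> subI A B -> ~ subI B A -> is_chain A B 1.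
Proof.
move=> iA iB AB BA; exists (fun k => if k == 0%N then A else B); split; first by move=> k; case: ifP.
by split => //; split => //; case.
Qed.

Lemma has_len_ex A B : is_ideal A -> is_ideal B -> subI A B -> exists n, has_length A B n.
Proof.
move=> iA iB AB; have [M HM] := chain_bound.
apply: (@max_nat (is_chain A B) M); last by move=> n; apply: HM.
case: (classic (subI B A)) => BA; last by exists 1%N; apply: chain_one.
by exists 0%N; apply: (chain_ext (chain_refl iA)) => // x; split => [/AB|/BA].
Qed.

Lemma has_len_uniq A B n n' : has_length A B n -> has_length A B n' -> n = n'.
Proof. by move=> [H1 H2] [H1' H2']; apply/eqP; rewrite eqn_leq H2 // H2'. Qed.

Lemma has_len_ext A B A' B' n : has_length A B n -> eqI A A' -> eqI B B' -> has_length A' B' n.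
Proof.
move=> [H1 H2] EA EB; split; first exact: chain_ext H1 EA EB.
move=> k Hk; apply: H2; apply: (chain_ext Hk) => x.
  by case: (EA x).
by case: (EB x).
Qed.

Lemma has_len0 A B n : is_ideal A -> has_length A B n -> subI B A -> n = 0%N.
Proof.
move=> iA [[c [ic [c0 [cn Hc]]]] _] BA; case: n cn Hc => // n cn Hc.
have [E mc] := chain_cnt Hc.
exfalso; have [_ H] := Hc 0%N (ltn0Sn _); apply: H => x Hx; apply/c0; apply: BA; apply/cn.
have : forall j, (j <= n)%N -> c j.+1 x.
  elim=> // j IHj jn; apply: mc => //; apply: IHj; exact: ltnW.
by move=> /(_ n (leqnn _)).
Qed.

Lemma has_len_pos A B n : has_length A B n -> ~ subI B A -> is_ideal A -> is_ideal B -> subI A B -> (0 < n)%N.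
Proof. by move=> [_ H] BA iA iB AB; apply: H; apply: chain_one. Qed.

Lemma has_len_add A B C p q : is_ideal A -> is_ideal B -> is_ideal C -> subI A B -> subI B C ->
  has_length A B p -> has_length B C q -> has_length A C (p + q).
Proof.
move=> iA iB iC AB BC [hAB mAB] [hBC mBC]; split.
  move: hAB hBC => [c1 [ic1 [c10 [c1p H1]]]] [c2 [ic2 [c20 [c2q H2]]]].
  pose e k := if (k <= p)%N then c1 k else c2 (k - p)%N.
  have Ek : forall k, (p <= k)%N -> eqI (e k) (c2 (k - p)%N).
    move=> k pk; rewrite /e; case: ifP => kp; last by [].
    have -> : k = p by apply/eqP; rewrite eqn_leq kp pk.
    by rewrite subnn => x; split => [/c1p/c20|/c20/c1p].
  exists e; split; first by move=> k; rewrite /e; case: ifP.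
  split; first by rewrite /e leq0n.
  split; first by move=> x; rewrite (Ek _ (leq_addr _ _)) addKn; apply: c2q.
  move=> k kpq; case: (ltnP k p) => kp.
    by rewrite /e (ltnW kp) kp; apply: H1.
  apply: (step_ext (X := c2 (k - p)%N) (Y := c2 (k.+1 - p)%N)).
  - by move=> x; split => /(Ek k kp).
  - by move=> x; split => /(Ek k.+1 (leqW kp)).
  by rewrite subSn //; apply: H2; rewrite ltn_subLR.
move=> k [c [ic [c0 [ck Hc]]]]; have [E mc] := chain_cnt Hc; rewrite -E.
apply: (leq_trans (cnt_split ic mc iB)); apply: leq_add.
  apply: mAB; apply: (chain_ext (compress (d := fun k => capI (c k) B) _ _)).
  - by move=> j; apply: capI_ideal.
  - by move=> j jk x [Hx Bx]; split => //; apply: mc.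
  - move=> x; split; first by move=> [/c0].
    by move=> Ax; split; [apply/c0|apply: AB].
  move=> x; split; first by move=> [].
  by move=> Bx; split => //; apply/ck; apply: BC.
apply: mBC; apply: (chain_ext (compress (d := fun k => sumI (c k) B) _ _)).
- by move=> j; apply: sumI_ideal.
- by move=> j jk x [a [b [Ha [Hb ->]]]]; exists a, b; split => //; apply: mc.
- move=> x; split; last by apply: sumI_r.
  by move=> [a [b [/c0 /AB Ha [Hb ->]]]]; apply: idD.
move=> x; split.
  by move=> [a [b [/ck Ha [/BC Hb ->]]]]; apply: idD.
by move=> /ck Hx; apply: sumI_l.
Qed.

End Lengths.

Section Duality.
Variable R : comUnitRingType.
Implicit Types J K A B C X Y : R -> Prop.
Variable m : R -> Prop.
Hypothesis noeth : noetherian R.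
Hypothesis loc : is_local m.
Hypothesis d0 : dim0 m.
Hypothesis ss : simple_socle m.

Definition ann J := colon (@zeroI R) J.

Lemma ann_ideal J : is_ideal (ann J). Proof. by apply: colon_ideal; apply: ideal_zero. Qed.
Lemma ann_anti J J' : subI J J' -> subI (ann J') (ann J).
Proof. by move=> H x Hx y Jy; apply: Hx; apply: H. Qed.
Lemma ann_True : eqI (ann (fun _ => True)) (@zeroI R).
Proof. move=> x; split; first by move=> /(_ 1 I); rewrite /zeroI mulr1. by rewrite /zeroI => -> y _; rewrite mul0r. Qed.
Lemma ann_zero : eqI (ann (@zeroI R)) (fun _ => True).
Proof. by move=> x; split => // _ y; rewrite /zeroI => ->; rewrite mulr0. Qed.

Lemma has_len_0 A B : has_length A B 0 -> subI B A.
Proof. by move=> [[c [_ [c0 [cn _]]]] _] x /cn /c0. Qed.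

Lemma chain_mono (c : nat -> R -> Prop) n :
  (forall k, (k < n)%N -> subI (c k) (c k.+1)) ->
  forall k j, (k <= n)%N -> (j <= k)%N -> subI (c j) (c k).
Proof.
move=> Hc; elim=> [|k IH] j kn jk.
  by rewrite leqn0 in jk; rewrite (eqP jk).
rewrite leq_eqVlt in jk; case/orP: jk => [/eqP -> //|jk].
move=> x /(IH j (ltnW kn) jk); exact: Hc.
Qed.

Lemma chain_steps A B n : is_chain A B n -> exists c : nat -> R -> Prop, (forall k, is_ideal (c k)) /\ eqI (c 0%N) A /\ eqI (c n) B /\ (forall k j, (k <= n)%N -> (j <= k)%N -> subI (c j) (c k)) /\ (forall k, (k < n)%N -> subI (c k) (c k.+1) /\ ~ subI (c k.+1) (c k)).
Proof.
move=> [c [ic [c0 [cn Hc]]]]; exists c; do 3!(split => //); split => //.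
by apply: chain_mono => k /Hc [].
Qed.

Lemma not_sub_ex X Y : ~ subI X Y -> exists x, X x /\ ~ Y x.
Proof. by move=> H; apply: NNPP => Hn; apply: H => x Xx; apply: NNPP => nY; apply: Hn; exists x. Qed.

Lemma step_dual J J1 : is_ideal J -> is_ideal J1 -> subI J J1 -> has_length J J1 1 ->
  exists l, has_length (ann J1) (ann J) l /\ (l <= 1)%N.
Proof.
move=> iJ iJ1 JJ1 hl.
have [l hl'] := has_len_ex noeth loc d0 (ann_ideal J1) (ann_ideal J) (ann_anti JJ1).
exists l; split => //; rewrite leqNgt; apply/negP => l2.
have nJ1J : ~ subI J1 J by move=> H; have := has_len0 iJ hl H.
have [w [J1w nJw]] := not_sub_ex nJ1J.
have [c [nz mz]] := socle_lemma noeth d0 iJ nJw.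
set z := c * w in nz mz.
have J1z : J1 z by apply: idM.
have J1sub : subI J1 (addx J z).
  apply: NNPP => Hn; suff : is_chain J J1 2 by move/(hl.2 2%N).
  exists (fun k => if k == 0%N then J else if k == 1%N then addx J z else J1).
  split; first by move=> k /=; case: (k == 0%N) => //; case: (k == 1%N) => //; apply: addx_ideal.
  split => //; split => //.
  case=> [|[|//]] _ /=.
    split; first by move=> x; apply: addx_sub.
    by move=> H; apply: nz; apply: H; apply: addx_x.
  split => //.
  by move=> x [a [b [Ja ->]]]; apply: idD => //; [apply: JJ1 | apply: idM].
have key : forall y, ann J y -> (y * z = 0) -> ann J1 y.
  move=> y Hy yz v /J1sub [a [b [Ja ->]]].
  rewrite /zeroI mulrDr (Hy a Ja) add0r mulrCA yz mulr0 //.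
have soc : forall y, ann J y -> colon (@zeroI R) m (y * z).
  by move=> y Hy a ma; rewrite /zeroI -mulrA [z * a]mulrC; apply: Hy; apply: mz.
have [e [ie [e0 [el [emono Hs]]]]] := chain_steps hl'.1.
have [y1 [e1y1 ne0y1]] := not_sub_ex (Hs 0%N (leq_trans (isT : 0 < 2)%N l2)).2.
have [y2 [e2y2 ne1y2]] := not_sub_ex (Hs 1%N l2).2.
have annJ : forall y j, (j <= l)%N -> e j y -> ann J y.
  by move=> y j jl Hy; apply/el; apply: (emono l j (leqnn _) jl).
have y1J := annJ y1 1%N (ltnW (leq_trans (isT : 1 < 2)%N l2)) e1y1.
have y2J := annJ y2 2%N l2 e2y2.
have y1z : y1 * z <> 0.
  by move=> H; apply: ne0y1; apply/e0; apply: key.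
have [_ simp] := ss.
have iY : is_ideal (fun t => exists c, t = c * (y1 * z)).
  split; first by exists 0; rewrite mul0r.
  split; first by move=> x y [a ->] [b ->]; exists (a + b); rewrite mulrDl.
  by move=> a x [b ->]; exists (a * b); rewrite mulrA.
case: (simp _ iY).
- move=> t [c' ->]; apply: (@idM R (colon (@zeroI R) m) c' (y1 * z)); [apply: colon_ideal; apply: ideal_zero | apply: soc => //].
- by move=> H; apply: y1z; apply: H; exists 1; rewrite mul1r.
move=> H; have [c' Hc'] := H _ (soc y2 y2J).
apply: ne1y2.
have -> : y2 = (y2 - c' * y1) + c' * y1 by rewrite subrK.
apply: idD => //; last by apply: idM.
apply: (emono 1%N 0%N) => //; first exact: ltnW.
apply/e0; apply: key.
  apply: (@idB R (ann J)); [exact: ann_ideal | exact: y2J | apply: (@idM R (ann J)); [exact: ann_ideal | exact: y1J]].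
by rewrite mulrBl Hc' mulrA subrr.
Qed.

Lemma has_len_shift A B n c : (forall k, is_ideal (c k)) -> eqI (c n.+1) B ->
  (forall k, (k < n.+1)%N -> subI (c k) (c k.+1) /\ ~ subI (c k.+1) (c k)) ->
  is_chain (c 1%N) B n.
Proof.
move=> ic cn Hc; exists (fun k => c k.+1); split => //; split => //; split => //.
by move=> k kn; apply: Hc.
Qed.

Lemma dual_le L : forall J J', is_ideal J -> is_ideal J' -> subI J J' -> has_length J J' L ->
  exists l, has_length (ann J') (ann J) l /\ (l <= L)%N.
Proof.
elim: L => [|L IH] J J' iJ iJ' JJ' hl.
  have J'J := has_len_0 hl.
  have [l hl'] := has_len_ex noeth loc d0 (ann_ideal J') (ann_ideal J) (ann_anti JJ').
  exists l; split => //; rewrite leqn0; apply/eqP; apply: (has_len0 (ann_ideal J') hl').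
  exact: ann_anti.
have [c [ic [c0 [cn [cm Hs]]]]] := chain_steps hl.1.
have iC := ic 1%N.
have JC : subI J (c 1%N) by move=> x /c0 Hx; apply: (cm 1%N 0%N).
have CJ' : subI (c 1%N) J' by move=> x Hx; apply/cn; apply: (cm L.+1 1%N).
have [a ha] := has_len_ex noeth loc d0 iJ iC JC.
have [b hb] := has_len_ex noeth loc d0 iC iJ' CJ'.
have hab := has_len_add iJ iC iJ' JC CJ' ha hb.
have Eab := has_len_uniq hab hl.
have apos : (0 < a)%N.
  apply: (has_len_pos ha) => // H; apply: (Hs 0%N (ltn0Sn _)).2 => x /H /c0 //.
have bL : (L <= b)%N by apply: hb.2; apply: has_len_shift.
have a1 : a = 1%N by move: Eab apos bL; clear; lia.
have b1 : b = L by move: Eab apos bL; clear; lia.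
rewrite a1 in ha; rewrite b1 in hb.
have [l1 [hl1 l1L]] := IH _ _ iC iJ' CJ' hb.
have [l2 [hl2 l21]] := step_dual iJ iC JC ha.
exists (l1 + l2)%N; split.
  exact: (has_len_add (ann_ideal _) (ann_ideal _) (ann_ideal _) (ann_anti CJ') (ann_anti JC) hl1 hl2).
by rewrite -addn1 leq_add.
Qed.

Lemma dual_eq J J' L : is_ideal J -> is_ideal J' -> subI J J' -> has_length J J' L ->
  has_length (ann J') (ann J) L.
Proof.
move=> iJ iJ' JJ' hl.
have i0 := @ideal_zero R; have iT := @ideal_True R.
have [a ha] := has_len_ex noeth loc d0 i0 iJ (fun x (H : zeroI x) => (eq_ind_r J (id0 iJ) H)).
have [b hb] := has_len_ex noeth loc d0 iJ' iT (fun _ _ => I).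
have [a' [ha' a'a]] := dual_le i0 iJ (fun x (H : zeroI x) => (eq_ind_r J (id0 iJ) H)) ha.
have [l [hl' lL]] := dual_le iJ iJ' JJ' hl.
have [b' [hb' b'b]] := dual_le iJ' iT (fun _ _ => I) hb.
have h1 := has_len_add i0 iJ iT (fun x (H : zeroI x) => (eq_ind_r J (id0 iJ) H)) (fun _ _ => I) ha
  (has_len_add iJ iJ' iT JJ' (fun _ _ => I) hl hb).
have z0J : subI (@zeroI R) J by move=> x H; rewrite H; apply: id0.
have s1 : subI (ann (fun _ => True)) (ann J') by apply: ann_anti.
have s2 : subI (ann J') (ann J) by apply: ann_anti.
have s3 : subI (ann J) (ann (@zeroI R)) by apply: ann_anti.
have s23 : subI (ann J') (ann (@zeroI R)) by move=> x /s2 /s3.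
have h3 := has_len_add (ann_ideal _) (ann_ideal _) (ann_ideal _) s2 s3 hl' ha'.
have h2 := has_len_add (ann_ideal _) (ann_ideal _) (ann_ideal _) s1 s23 hb' h3.
have h2' := has_len_ext h2 ann_True ann_zero.
have E := has_len_uniq h1 h2'.
have -> : L = l by move: E a'a lL b'b; clear; lia.
exact: hl'.
Qed.

Lemma ann_ann J : is_ideal J -> eqI (ann (ann J)) J.
Proof.
move=> iJ.
have JJ : subI J (ann (ann J)) by move=> x Jx y Hy; rewrite /zeroI mulrC; apply: Hy.
suff H : subI (ann (ann J)) J by move=> x; split; [apply: H | apply: JJ].
have [n hn] := has_len_ex noeth loc d0 iJ (ann_ideal _) JJ.
have hd := dual_eq iJ (ann_ideal _) JJ hn.
have E : eqI (ann (ann (ann J))) (ann J).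
  move=> x; split; first by apply: ann_anti.
  by move=> Hx y Hy; rewrite /zeroI mulrC; apply: Hy.
have hd' := has_len_ext hd E (fun x => conj id id).
have n0 := has_len0 (ann_ideal J) hd' (fun x H => H).
by rewrite n0 in hn; apply: has_len_0.
Qed.

End Duality.

Section GBasics.
Variable R : comUnitRingType.
Implicit Types f g x y : Gel R.

Definition single (j : nat) (c : R) : Gel R := fun k => if k == j then c else 0.
Definition sc c := single 0 c.

Lemma Gmul_single_r x j c k :
  Gmul x (single j c) k = if (j <= k)%N then x (k - j)%N * c else 0.
Proof.
rewrite /Gmul /single; case: leqP => jk.
  have Hi : (k - j < k.+1)%N by rewrite ltnS leq_subr.
  rewrite (bigD1 (Ordinal Hi)) //= subKn // eqxx big1 ?addr0 // => i /eqP Hne.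
  case: eqP => E; last by rewrite mulr0.
  exfalso; apply: Hne; apply: val_inj => /=.
  have := ltn_ord i; rewrite ltnS => ik; lia.
rewrite big1 // => i _; case: eqP => E; last by rewrite mulr0.
exfalso; have := ltn_ord i; lia.
Qed.

Lemma Gmul_single_l j c y k :
  Gmul (single j c) y k = if (j <= k)%N then c * y (k - j)%N else 0.
Proof.
rewrite /Gmul /single; case: leqP => jk.
  have Hi : (j < k.+1)%N by rewrite ltnS.
  rewrite (bigD1 (Ordinal Hi)) //= eqxx big1 ?addr0 // => i /eqP Hne.
  case: eqP => E; last by rewrite mul0r.
  exfalso; apply: Hne; exact: val_inj.
rewrite big1 // => i _; case: eqP => E; last by rewrite mul0r.
exfalso; have := ltn_ord i; lia.
Qed.

Lemma Gmul_sc_l c y k : Gmul (sc c) y k = c * y k.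
Proof. by rewrite Gmul_single_l subn0. Qed.

Lemma Gmul0 f g : Gmul f g 0%N = f 0%N * g 0%N.
Proof. by rewrite /Gmul big_ord_recl big_ord0 addr0. Qed.

Lemma GmulC f g k : Gmul f g k = Gmul g f k.
Proof.
rewrite /Gmul (reindex_inj rev_ord_inj) /=; apply: eq_bigr => i _.
rewrite mulrC; congr (_ * _); congr g; rewrite subSS; have := ltn_ord i; lia.
Qed.

Variable I : R -> Prop.
Hypothesis iI : is_ideal I.

Lemma big_ideal (J : R -> Prop) n (F : 'I_n -> R) : is_ideal J -> (forall i, J (F i)) -> J (\sum_(i < n) F i).
Proof. by move=> iJ H; apply: big_ind => //; [apply: id0 | move=> a b; apply: idD]. Qed.

Lemma inG_single j c : powI I j c -> inG I (single j c).
Proof. by move=> H k; rewrite /single; case: eqP => [->//|_]; apply: id0; apply: powI_ideal. Qed.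
Lemma inG_sc c : inG I (sc c). Proof. by apply: inG_single. Qed.
Lemma inG_Gzero : inG I (Gzero R). Proof. by move=> k; apply: id0; apply: powI_ideal. Qed.
Lemma inG_Gone : inG I (Gone R). Proof. exact: inG_sc. Qed.
Lemma inG_Gadd f g : inG I f -> inG I g -> inG I (Gadd f g).
Proof. by move=> Hf Hg k; apply: idD; [apply: powI_ideal|apply: Hf|apply: Hg]. Qed.
Lemma inG_Gmul f g : inG I f -> inG I g -> inG I (Gmul f g).
Proof.
move=> Hf Hg k; apply: big_ideal; first exact: powI_ideal.
move=> i; have := powI_mul iI (Hf i) (Hg (k - i)%N).
by rewrite subnKC //; have := ltn_ord i.
Qed.
Lemma inG_scale c f : inG I f -> inG I (fun k => c * f k).
Proof. by move=> Hf k; apply: idM; [apply: powI_ideal|apply: Hf]. Qed.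

Lemma geq_refl f : Defs.geq I f f.
Proof. by move=> k; rewrite subrr; apply: id0; apply: powI_ideal. Qed.
Lemma geq_ext f g : (forall k, f k = g k) -> Defs.geq I f g.
Proof. by move=> H k; rewrite H subrr; apply: id0; apply: powI_ideal. Qed.
Lemma geq_sym f g : Defs.geq I f g -> Defs.geq I g f.
Proof. by move=> H k; rewrite -opprB; apply: idN; [apply: powI_ideal|apply: H]. Qed.
Lemma geq_trans f g h : Defs.geq I f g -> Defs.geq I g h -> Defs.geq I f h.
Proof.
move=> H1 H2 k; have -> : f k - h k = (f k - g k) + (g k - h k) by rewrite addrA subrK.
by apply: idD; [apply: powI_ideal|apply: H1|apply: H2].
Qed.

Lemma geq_Gmul_l f f' g : inG I g -> Defs.geq I f f' -> Defs.geq I (Gmul f g) (Gmul f' g).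
Proof.
move=> Hg H k; rewrite /Gmul -sumrB; apply: big_ideal; first exact: powI_ideal.
move=> i; rewrite -mulrBl; have := powI_mul iI (H i) (Hg (k - i)%N).
by rewrite addSn subnKC //; have := ltn_ord i.
Qed.

Lemma geq_Gmul_r f g g' : inG I f -> Defs.geq I g g' -> Defs.geq I (Gmul f g) (Gmul f g').
Proof.
move=> Hf H k; rewrite (GmulC f g) (GmulC f g'); exact: geq_Gmul_l.
Qed.

End GBasics.

Section GInv.
Variable R : comUnitRingType.
Implicit Types f g x y : Gel R.

Fixpoint gl f (v : R) (n : nat) : seq R :=
  match n with
  | 0 => [:: v]
  | n.+1 => rcons (gl f v n) (- v * \sum_(j < n.+1) f j.+1 * nth 0 (gl f v n) (n - j)%N)
  end.
Definition ginv f v : Gel R := fun k => nth 0 (gl f v k) k.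

Lemma size_gl f v n : size (gl f v n) = n.+1.
Proof. by elim: n => [|n IH] //=; rewrite size_rcons IH. Qed.

Lemma nth_gl f v n i : (i <= n)%N -> nth 0 (gl f v n) i = ginv f v i.
Proof.
rewrite /ginv; elim: n => [|n IH] in i *.
  by rewrite leqn0 => /eqP ->.
rewrite leq_eqVlt => /orP [/eqP -> //|iN].
by rewrite /= nth_rcons size_gl iN; apply: IH.
Qed.

Lemma ginvS f v k : ginv f v k.+1 = - v * \sum_(j < k.+1) f j.+1 * ginv f v (k - j)%N.
Proof.
rewrite {1}/ginv /= nth_rcons size_gl ltnn eqxx; congr (_ * _).
by apply: eq_bigr => j _; rewrite nth_gl // leq_subr.
Qed.

Lemma ginv0 f v : ginv f v 0%N = v. Proof. by []. Qed.

Lemma Gmul_ginv f : f 0%N \is a GRing.unit -> forall k, Gmul f (ginv f (f 0%N)^-1) k = Gone R k.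
Proof.
move=> u [|k].
  by rewrite Gmul0 ginv0 mulrV.
rewrite /Gmul big_ord_recl /= subn0 ginvS /Gone /=.
rewrite mulrA mulrN mulrV // mulN1r.
rewrite addrC; apply/eqP; rewrite subr_eq0; apply/eqP.
by apply: eq_bigr => j _; rewrite subSS.
Qed.

Variable I : R -> Prop.
Hypothesis iI : is_ideal I.

Lemma inG_ginv f v : inG I f -> inG I (ginv f v).
Proof.
move=> Hf.
suff H : forall n k, (k <= n)%N -> powI I k (ginv f v k) by move=> k; apply: (H k).
elim=> [|n IH] k kn.
  by rewrite leqn0 in kn; rewrite (eqP kn).
rewrite leq_eqVlt in kn; case/orP: kn => [/eqP ->|kn]; last by apply: IH.
rewrite ginvS; apply: idM; first exact: powI_ideal.
apply: big_ideal; first exact: powI_ideal.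
move=> j; have jn : (j <= n)%N by have := ltn_ord j.
have := powI_mul iI (Hf j.+1) (IH (n - j)%N (leq_subr _ _)).
by rewrite addSn subnKC.
Qed.

End GInv.

Section GProps.
Variable R : comUnitRingType.
Implicit Types f g x y : Gel R.
Variables (m I : R -> Prop) (r : nat).
Hypothesis loc : is_local m.
Hypothesis d0 : dim0 m.
Hypothesis noeth : noetherian R.
Hypothesis iI : is_ideal I.
Hypothesis Im : subI I m.
Hypothesis Ir1 : eqI (powI I r.+1) (@zeroI R).

Section GidealFacts.
Variable J : Gel R -> Prop.
Hypothesis gJ : Gideal I J.
Lemma Gi_in x : J x -> inG I x. Proof. by case: gJ => H _; apply: H. Qed.
Lemma Gi_zero : J (Gzero R). Proof. by case: gJ => _ []. Qed.
Lemma Gi_geq x y : J x -> inG I y -> Defs.geq I x y -> J y.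
Proof. by case: gJ => _ [_ [H _]]; apply: H. Qed.
Lemma Gi_add x y : J x -> J y -> J (Gadd x y).
Proof. by case: gJ => _ [_ [_ [H _]]]; apply: H. Qed.
Lemma Gi_mul a x : inG I a -> J x -> J (Gmul a x).
Proof. by case: gJ => _ [_ [_ [_ H]]]; apply: H. Qed.
Lemma Gi_lin x y c : J x -> J y -> J (fun k => x k + c * y k).
Proof.
move=> Jx Jy; have H := Gi_add Jx (Gi_mul (inG_sc iI c) Jy).
apply: Gi_geq H _ _.
  by apply: (inG_Gadd iI); [apply: Gi_in | apply: (inG_scale iI); apply: Gi_in].
by apply: (geq_ext iI) => k; rewrite /Gadd Gmul_sc_l.
Qed.
Lemma Gi_ext x y : J x -> (forall k, x k = y k) -> J y.
Proof.
move=> Jx E; have Hy : inG I y by move=> k; rewrite -E; exact: (Gi_in Jx k).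
exact: (Gi_geq Jx Hy (geq_ext iI E)).
Qed.
End GidealFacts.

Lemma pow_zero n (z : R) : (r < n)%N -> powI I n z -> z = 0.
Proof. by move=> rn H; apply: (pow_big Ir1 rn H). Qed.

Lemma Gmax_ideal : Gideal I (Gmax m I).
Proof.
split; first by move=> x [].
split; first by split; [apply: (inG_Gzero iI) | apply: id0; apply: mideal loc].
split.
  move=> x y [Hx mx] Hy Hxy; split => //.
  have := Hxy 0%N => /(powI1 iI) /Im Hd.
  have -> : y 0%N = x 0%N - (x 0%N - y 0%N) by rewrite opprB addrC subrK.
  by apply: idB => //; apply: mideal loc.
split.
  move=> x y [Hx mx] [Hy my]; split; first exact: (inG_Gadd iI).
  by apply: idD => //; apply: mideal loc.
move=> a x Ha [Hx mx]; split; first exact: (inG_Gmul iI).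
by rewrite Gmul0; apply: idM => //; apply: mideal loc.
Qed.

Lemma G_local_ok : G_local m I.
Proof.
split; first exact: Gmax_ideal.
split; first by move=> [_ H]; apply: (m1 loc).
move=> f Hf nm; exists (ginv f (f 0%N)^-1); split; first exact: inG_ginv.
apply: (geq_ext iI) => k; apply: Gmul_ginv.
apply: (munit loc) => H; apply: nm; split => //.
Qed.

Definition pw f n := iter n (Gmul f) (Gone R).

Lemma pw_low f : f 0%N = 0 -> forall n k, (k < n)%N -> pw f n k = 0.
Proof.
move=> f0; elim=> [|n IH] k // kn /=.
rewrite /Gmul big1 // => i _.
case: (i : nat) (ltn_ord i) => [|j] ij; first by rewrite f0 mul0r.
by rewrite IH ?mulr0 //; lia.
Qed.

Lemma pw_in f n : inG I f -> inG I (pw f n).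
Proof. by move=> Hf; elim: n => [|n IH] /=; [apply: (inG_Gone iI) | apply: (inG_Gmul iI)]. Qed.

Lemma pw_nil f : inG I f -> f 0%N = 0 -> Defs.geq I (pw f r.+1) (Gzero R).
Proof.
move=> Hf f0; apply: (geq_ext iI) => k; rewrite /Gzero.
case: (ltnP k r.+1) => kr; first by apply: pw_low.
by apply: (pow_zero kr); apply: pw_in.
Qed.

Lemma G_dim0_ok : G_dim0 m I.
Proof.
move=> P [gP [nP1 prP]].
pose p := fun a => P (sc a).
have Psc : forall a, P (sc a) -> forall c, P (sc (c * a)).
  move=> a Pa c; apply: (Gi_ext gP (Gi_mul gP (inG_sc iI c) Pa)) => k.
  by rewrite Gmul_sc_l /sc /single; case: eqP; rewrite ?mulr0.
have pprime : is_prime p.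
  split; last split.
  - split; first by apply: (Gi_ext gP (Gi_zero gP)) => k; rewrite /sc /single; case: eqP.
    split; last by move=> a x Hx; apply: Psc.
    move=> a b Pa Pb; apply: (Gi_ext gP (Gi_lin gP 1 Pa Pb)) => k.
    by rewrite mul1r /sc /single; case: eqP; rewrite ?addr0.
  - by move=> H; apply: nP1; apply: (Gi_ext gP H) => k.
  move=> a b Pab; apply: prP; [exact: inG_sc | exact: inG_sc |].
  apply: (Gi_ext gP Pab) => k; rewrite Gmul_sc_l /sc /single; case: eqP; by rewrite ?mulr0.
have pm := d0 pprime.
pose xp x : Gel R := fun k => if k == 0%N then 0 else x k.
have xpP : forall x, inG I x -> P (xp x).
  move=> x Hx.
  have Hxp : inG I (xp x) by move=> k; rewrite /xp; case: eqP => _; [apply: id0; apply: powI_ideal|apply: Hx].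
  have H0 : P (pw (xp x) r.+1).
    apply: (Gi_geq gP (Gi_zero gP)); first exact: pw_in.
    by apply: (geq_sym iI); apply: pw_nil.
  elim: r.+1 H0 => [|n IH] H; first by exfalso; apply: nP1.
  by case: (prP _ _ Hxp (pw_in n Hxp) H) => // /IH.
move=> x; split.
  move=> Px; have Hx := Gi_in gP Px; split => //.
  apply/pm; apply: (Gi_ext gP (Gi_lin gP (-1) Px (xpP x Hx))) => k.
  by rewrite /xp /sc /single; case: eqP => [->|_]; rewrite ?mulr0 ?addr0 // mulN1r subrr.
move=> [Hx mx].
have Ps : P (sc (x 0%N)) by apply/pm.
apply: (Gi_ext gP (Gi_lin gP 1 Ps (xpP x Hx))) => k.
by rewrite mul1r /xp /sc /single; case: eqP => [->|_]; rewrite ?addr0 ?add0r.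
Qed.

Lemma G_noeth_ok : G_noetherian I.
Proof.
move=> c gc mc.
have mcl : forall n n' x, (n <= n')%N -> c n x -> c n' x.
  move=> n n' x /subnK <-; elim: (n' - n)%N => [|k IH] // Hx.
  by rewrite addSn; apply: mc; apply: IH.
pose P k n := fun a => exists f, c n f /\ (forall j, (k < j)%N -> f j = 0) /\ f k = a.
have iP : forall k n, is_ideal (P k n).
  move=> k n; split; first by exists (Gzero R); split; [apply: Gi_zero|].
  split.
    move=> a b [f [cf [sf <-]]] [g [cg [sg <-]]]; exists (Gadd f g); split; first exact: Gi_add.
    by split => // j kj; rewrite /Gadd sf // sg // addr0.
  move=> b a [f [cf [sf <-]]]; exists (fun k => b * f k); split.
    by apply: (Gi_ext (gc n) (Gi_mul (gc n) (inG_sc iI b) cf)) => k'; rewrite Gmul_sc_l.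
  by split => // j kj; rewrite sf // mulr0.
have mP : forall k n n', (n <= n')%N -> subI (P k n) (P k n').
  by move=> k n n' nn a [f [cf sf]]; exists f; split => //; apply: mcl cf.
have HN : forall rr, exists N, forall k n, (k <= rr)%N -> (N <= n)%N -> subI (P k n) (P k N).
  elim=> [|rr [N1 H1]].
    have [N0 H0] := @noeth (P 0%N) (iP 0%N) (fun n => mP 0%N n n.+1 (leqnSn _)).
    by exists N0 => k n; rewrite leqn0 => /eqP -> ; apply: H0.
  have [N2 H2] := @noeth (P rr.+1) (iP rr.+1) (fun n => mP rr.+1 n n.+1 (leqnSn _)).
  exists (maxn N1 N2) => k n kr Nn.
  rewrite leq_eqVlt in kr; case/orP: kr => [/eqP ->|kr].
    move=> a /(H2 n (leq_trans (leq_maxr _ _) Nn)); apply: mP; exact: leq_maxr.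
  move=> a /(H1 k n kr (leq_trans (leq_maxl _ _) Nn)); apply: mP; exact: leq_maxl.
have [N HN'] := HN r.
exists N => n x Nn cx.
suff H : forall K f, c n f -> (forall j, (K <= j)%N -> f j = 0) -> c N f.
  apply: (H r.+1 x cx) => j rj; apply: pow_zero rj _; exact: (Gi_in (gc n) cx j).
elim=> [|K IH] f cf sf.
  by apply: (Gi_ext (gc N) (Gi_zero (gc N))) => k; rewrite /Gzero sf.
case: (ltnP r K) => rK.
  apply: (IH f cf) => j Kj; rewrite leq_eqVlt in Kj; case/orP: Kj => [/eqP <-|]; last by apply: sf.
  apply: pow_zero rK _; exact: (Gi_in (gc n) cf K).
have [g [cg [sg gK]]] := HN' K n rK Nn (f K) (ex_intro _ f (conj cf (conj (fun j Kj => sf j Kj) erefl))).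
have cgn : c n g by apply: mcl cg.
have cd : c n (fun k => f k + (-1) * g k) by apply: Gi_lin.
have cd' : c N (fun k => f k + (-1) * g k).
  apply: (IH _ cd) => j Kj; rewrite leq_eqVlt in Kj; case/orP: Kj => [/eqP <-|Kj].
    by rewrite gK mulN1r subrr.
  by rewrite sf // sg // mulr0 addr0.
apply: (Gi_ext (gc N) (Gi_lin (gc N) 1 cd' cg)) => k.
by rewrite mul1r mulN1r subrK.
Qed.

End GProps.

Section Main.
Variable R : comUnitRingType.
Implicit Types f g x y : Gel R.
Variables (m I : R -> Prop) (r : nat).
Hypothesis loc : is_local m.
Hypothesis d0 : dim0 m.
Hypothesis noeth : noetherian R.
Hypothesis ss : simple_socle m.
Hypothesis iI : is_ideal I.
Hypothesis Im : subI I m.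
Hypothesis Hr : exists z : R, powI I r z /\ z <> 0.
Hypothesis Ir1 : eqI (powI I r.+1) (@zeroI R).

Let pz n (z : R) : (r < n)%N -> powI I n z -> z = 0.
Proof. by move=> rn H; apply: (pow_big Ir1 rn H). Qed.
Let pI n := powI_ideal iI n.

Lemma geq0P f : Defs.geq I f (Gzero R) <-> forall k, powI I k.+1 (f k).
Proof. by split => H k; [have := H k; rewrite /Gzero subr0 | rewrite /Gzero subr0; apply: H]. Qed.

Lemma top_soc : exists z, powI I r z /\ z <> 0 /\ forall a, m a -> a * z = 0.
Proof.
have [x [Px nx]] := Hr.
have [c [nz Hz]] := socle_lemma noeth d0 (@ideal_zero R) nx.
by exists (c * x); split; [apply: idM | split].
Qed.

Lemma Gsoc_top z : powI I r z -> (forall a, m a -> a * z = 0) -> Gsoc m I (single r z).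
Proof.
move=> Pz Hz; split; first exact: (inG_single iI).
move=> y [Hy my]; apply/geq0P => k; rewrite Gmul_single_l.
case: ltngtP => rk.
- have := powI_mul iI Pz (Hy (k - r)%N); rewrite subnKC; last exact: ltnW.
  by move=> /(pz rk) ->; apply: id0.
- by apply: id0.
- by rewrite rk subnn mulrC Hz //; apply: id0.
Qed.

Lemma soc_m x : Gsoc m I x -> forall j a, m a -> powI I j.+1 (x j * a).
Proof.
move=> [Hx Hs] j a ma.
have := (geq0P _).1 (Hs (sc a) (conj (inG_sc iI a) ma)) j.
by rewrite Gmul_single_r subn0.
Qed.

Lemma soc_I x : Gsoc m I x -> forall j a, I a -> powI I j.+2 (x j * a).
Proof.
move=> [Hx Hs] j a Ia.
have Hy : Gmax m I (single 1 a).
  split; first by apply: (inG_single iI); apply/(powI1 iI).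
  by rewrite /single /=; apply: id0; apply: mideal loc.
have := (geq0P _).1 (Hs _ Hy) j.+1.
by rewrite Gmul_single_r subn1.
Qed.

Definition P3 := forall i, (i < r)%N -> eqI (ann (powI I (r - i))) (powI I i.+1).

Lemma socle_shape x : P3 -> Gsoc m I x -> forall j, j <> r -> powI I j.+1 (x j).
Proof.
move=> H3 Hs j jr; have Hx := Hs.1.
case: (ltnP r j) => rj.
  by rewrite (pz rj (Hx j)); apply: id0.
have jr' : (j < r)%N by rewrite ltn_neqAle rj andbT; apply/eqP.
apply/(H3 j jr') => y Py.
have := @pow_step _ _ iI (x j) j.+1 (soc_I Hs j) (r - j).-1 y.
rewrite prednK ?subn_gt0 // => /(_ Py).
have -> : (j.+2 + (r - j).-1)%N = r.+1 by lia.
by move/Ir1.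
Qed.

Lemma three_one : P3 -> G_Gorenstein m I.
Proof.
move=> H3; split; first exact: G_local_ok.
split; first exact: (G_noeth_ok noeth iI Ir1).
split; first exact: G_dim0_ok.
have [z [Pz [nz mz]]] := top_soc.
have shape : forall x, Gsoc m I x -> Defs.geq I x (single r (x r)).
  move=> x Hs k; rewrite /single; case: eqP => [->|kr]; first by rewrite subrr; apply: id0.
  by rewrite subr0; apply: socle_shape.
split.
  exists (single r z); split; first exact: Gsoc_top.
  by move=> /geq0P /(_ r); rewrite /single eqxx => /Ir1.
move=> N gN HN; case: (classic (forall x, N x -> Defs.geq I x (Gzero R))) => H; first by left.
right.
have [x [Nx nx]] : exists x, N x /\ ~ Defs.geq I x (Gzero R).
  by apply: NNPP => Hn; apply: H => x Nx; apply: NNPP => ng; apply: Hn; exists x.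
have xr : x r <> 0.
  move=> E; apply: nx; apply: (geq_trans iI (shape x (HN x Nx))).
  by apply: (geq_ext iI) => k; rewrite /single /Gzero; case: eqP => // ->.
pose J := fun a => N (single r a).
have iJ : is_ideal J.
  split; first by apply: (Gi_ext iI gN (Gi_zero gN)) => k; rewrite /single /Gzero; case: eqP.
  split.
    move=> a b Ja Jb; apply: (Gi_ext iI gN (Gi_lin iI gN 1 Ja Jb)) => k.
    by rewrite mul1r /single; case: eqP; rewrite ?addr0.
  move=> c a Ja; apply: (Gi_ext iI gN (Gi_mul gN (inG_sc iI c) Ja)) => k.
  by rewrite Gmul_sc_l /single; case: eqP; rewrite ?mulr0.
have Jsoc : subI J (colon (@zeroI R) m).
  move=> a Ja v mv; have := soc_m (HN _ Ja) r mv.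
  by rewrite /single eqxx => /Ir1.
have xJ : J (x r).
  apply: (Gi_geq gN Nx); first by apply: (inG_single iI); apply: (Gi_in gN Nx).
  exact: shape (HN x Nx).
have [_ simp] := ss.
case: (simp J iJ Jsoc) => [/(_ _ xJ)//|Hsub].
move=> y Hy.
have yJ : J (y r).
  apply: Hsub => v mv; have := soc_m Hy r mv; by move/Ir1.
apply: (Gi_geq gN yJ Hy.1); apply: (geq_sym iI); exact: shape.
Qed.
Definition P2 := forall i, (i < r)%N -> Soc_deg_zero m I i.

Lemma one_two : G_Gorenstein m I -> P2.
Proof.
move=> [_ [_ [_ [_ simp]]]] i ir x Hs Hh; apply: NNPP => nx.
have [Hx HS] := Hs.
pose N := fun y => inG I y /\ exists a, Defs.geq I y (fun k => a * x k).
have scal : forall a, inG I (fun k => a * x k) by move=> a; apply: (inG_scale iI).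
have gN : Gideal I N.
  split; first by move=> y [].
  split; first by split; [apply: (inG_Gzero iI) | exists 0; apply: (geq_ext iI) => k; rewrite mul0r].
  split; first by move=> y y' [Hy [a Ha]] Hy' Hyy'; split => //; exists a;
    apply: (geq_trans iI (geq_sym iI Hyy') Ha).
  split.
    move=> y y' [Hy [a Ha]] [Hy' [b Hb]]; split; first exact: (inG_Gadd iI).
    exists (a + b) => k; have -> : Gadd y y' k - (a + b) * x k = (y k - a * x k) + (y' k - b * x k).
      by rewrite /Gadd mulrDl opprD addrACA.
    by apply: idD; [apply: pI | apply: Ha | apply: Hb].
  move=> g y Hg [Hy [a Ha]]; split; first exact: (inG_Gmul iI).
  exists (g 0%N * a); apply: (geq_trans iI (geq_Gmul_r iI Hg Ha)) => k.
  rewrite /Gmul big_ord_recl /= subn0 mulrA addrAC subrr add0r.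
  apply: (@big_ideal _ (powI I k.+1)); first exact: pI.
  move=> j; have jk : (j < k)%N by [].
  have Hy' : Gmax m I (single j.+1 (g j.+1)).
    split; first by apply: (inG_single iI); apply: Hg.
    by rewrite /single /=; apply: id0; apply: mideal loc.
  have := (geq0P _).1 (HS _ Hy') k; rewrite Gmul_single_r jk.
  rewrite /bump leq0n add1n => H; rewrite mulrCA; apply: idM; [exact: pI|].
  by rewrite mulrC.
have Nsoc : forall y, N y -> Gsoc m I y.
  move=> y [Hy [a Ha]]; split => // w Hw.
  apply: (geq_trans iI (geq_Gmul_l iI Hw.1 Ha)); apply/geq0P => k.
  have := (geq0P _).1 (HS w Hw) k => H.
  have -> : Gmul (fun k => a * x k) w k = a * Gmul x w k.
    by rewrite /Gmul mulr_sumr; apply: eq_bigr => j _; rewrite mulrA.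
  by apply: idM.
case: (simp N gN Nsoc) => [H|H].
  by apply: nx; apply: H; split => //; exists 1; apply: (geq_ext iI) => k; rewrite mul1r.
have [z [Pz [nz mz]]] := top_soc.
have [_ [a Ha]] := H _ (Gsoc_top Pz mz).
have xr : x r = 0.
  have ri : r <> i by move=> E; rewrite E ltnn in ir.
  by apply/Ir1; apply: Hh.2.
have := Ha r; rewrite /single eqxx xr mulr0 subr0 => /Ir1.
exact: nz.
Qed.

Lemma two_three : P2 -> P3.
Proof.
move=> H2 i ir x; split; last first.
  move=> Px y Py; apply/Ir1.
  have := powI_mul iI Px Py; rewrite addSn subnKC //; exact: ltnW.
move=> Hx.
suff H : forall j, (j <= i)%N -> powI I j x -> powI I j.+1 x.
  have : forall j, (j <= i.+1)%N -> powI I j x.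
    elim=> // j IH ji; apply: H => //; apply: IH; exact: ltnW.
  by apply.
move=> j ji Pj; apply: NNPP => nPj.
pose S t := exists z, powI I t z /\ ~ powI I (j + t).+1 (x * z).
have S0 : S 0%N by exists 1; rewrite mulr1 addn0; split.
have Sb : forall t, S t -> (t <= r - j)%N.
  move=> t [z [Pz nz]]; rewrite leqNgt; apply/negP => tr; apply: nz.
  have -> : x * z = 0.
    apply: Hx; apply: (powI_le (b := t)) => //; lia.
  exact: id0.
have [t0 [[z0 [Pz0 nz0]] Hmax]] := @max_nat S (r - j) (ex_intro _ 0%N S0) Sb.
set k := (j + t0)%N in nz0.
have [c [nu mu]] := socle_lemma noeth d0 (pI k.+1) nz0.
set u := c * (x * z0) in nu mu.
have Pu : powI I k u by apply: idM; [apply: pI | apply: powI_mul].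
have uI : forall a, I a -> powI I k.+2 (u * a).
  move=> a Ia.
  have Pw : powI I t0.+1 (z0 * (c * a)).
    by rewrite -addn1; apply: powI_mul => //; apply/(powI1 iI); apply: idM.
  have -> : u * a = x * (z0 * (c * a)) by rewrite /u; ring.
  apply: NNPP => nH.
  have : S t0.+1 by exists (z0 * (c * a)); split => //; rewrite addnS.
  by move/Hmax; rewrite ltnn.
have kr : (k < r)%N.
  rewrite /k; apply: NNPP => /negP; rewrite -leqNgt => rk.
  apply: nz0; have -> : x * z0 = 0 by apply: Hx; apply: (powI_le (b := t0)) => //; lia.
  exact: id0.
have HU : Gsoc m I (single k u).
  split; first exact: (inG_single iI).
  move=> y [Hy my]; apply/geq0P => l; rewrite Gmul_single_l.
  case: ltngtP => kl.
  - have := @pow_step _ _ iI u k.+1 uI (l - k).-1 (y (l - k)%N).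
    rewrite prednK ?subn_gt0 // => /(_ (Hy _)).
    by have -> : (k.+2 + (l - k).-1)%N = l.+1 by lia.
  - by apply: id0.
  - by rewrite -kl subnn (mulrC u); apply: mu.
have Hh : Ghomog I k (single k u).
  split; first exact: (inG_single iI).
  by move=> l lk; rewrite /single; case: eqP => // _; apply: id0.
have := (geq0P _).1 (H2 k kr _ HU Hh) k.
by rewrite /single eqxx.
Qed.

End Main.

Section Main2.
Variable R : comUnitRingType.
Variables (m I : R -> Prop) (r : nat).
Hypothesis loc : is_local m.
Hypothesis d0 : dim0 m.
Hypothesis noeth : noetherian R.
Hypothesis ss : simple_socle m.
Hypothesis iI : is_ideal I.
Hypothesis Ir1 : eqI (powI I r.+1) (@zeroI R).

Let pI n := powI_ideal iI n.

Definition P6 := (forall i, (0 < i < r)%N ->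
          eqI (colon (powI I r) (powI I (r - i))) (powI I i)) /\
       eqI (colon (@zeroI R) I) (powI I r).
Definition P7 := (forall i, (0 < i < r)%N ->
          faithful_over (powI I i) (powI I (r - i)) (powI I r)) /\
       faithful_over (powI I r) I (@zeroI R).

Lemma annI_pow (x : R) : (forall y, I y -> x * y = 0) <-> ann (powI I 1) x.
Proof.
split => H y; first by move=> /(powI1 iI) /H.
by move=> Iy; apply: H; apply/(powI1 iI).
Qed.

Lemma three_six : P3 I r -> P6.
Proof.
move=> H3; split.
  move=> i /andP [i0 ir] x; split; last first.
    move=> Px y Py; have := powI_mul iI Px Py; by rewrite subnKC // ltnW.
  move=> Hx.
  have H := (H3 i.-1 (leq_ltn_trans (leq_pred _) ir) x).1.
  rewrite prednK // in H; apply: H => w.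
  have -> : (r - i.-1)%N = (r - i).+1 by lia.
  move=> [s [Hs ->]]; apply/Ir1; rewrite mulr_sumr; apply: id_sum => // p ps.
  have [P1 P2] := Hs p ps; rewrite mulrA.
  have := powI_mul iI (Hx _ P1) (iffRL (powI1 iI _) P2); by rewrite addn1.
move=> x; case: r Ir1 H3 => [|r'] Ir1' H3.
  split => // _ y Iy; apply/Ir1'; apply: idM => //; exact/(powI1 iI).
have := H3 r' (ltnSn _) x; rewrite subSn // subnn => H.
split; first by move=> Hx; apply/H; apply/annI_pow.
by move=> /H /annI_pow.
Qed.

Lemma six_three : P6 -> P3 I r.
Proof.
move=> [H6 H6'] i ir x; split; last first.
  move=> Px y Py; apply/Ir1.
  have := powI_mul iI Px Py; rewrite addSn subnKC //; exact: ltnW.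
move=> Hx.
have xy : forall y, powI I (r - i).-1 y -> colon (@zeroI R) I (x * y).
  move=> y Py v Iv; rewrite /zeroI -mulrA; apply: Hx.
  have := powI_mul iI Py (iffRL (powI1 iI _) Iv); rewrite addn1 prednK //; lia.
case: (ltnP i.+1 r) => ir'.
  apply/(H6 i.+1 _ x); first by rewrite ir'.
  move=> y Py; apply/H6'; apply: xy; move: Py; have -> : (r - i.+1)%N = (r - i).-1 by lia.
  done.
have E : r = i.+1 by lia.
rewrite -E; apply/(H6' x) => v Iv; have := xy 1; rewrite mulr1; apply => //.
by rewrite E subSn // subnn.
Qed.

Lemma six_seven : P6 -> P7.
Proof.
move=> [H6 H6']; split; last by move=> x Hx; apply/H6'.
by move=> i ii x Hx; apply/(H6 i ii).
Qed.

Lemma seven_six : P7 -> P6.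
Proof.
move=> [H7 H7']; split.
  move=> i /andP [i0 ir] x; split; first by apply: H7; rewrite i0.
  move=> Px y Py; have := powI_mul iI Px Py; by rewrite subnKC // ltnW.
move=> x; split; first exact: H7'.
move=> Px y Iy; apply/Ir1; rewrite -addn1; apply: powI_mul => //; exact/(powI1 iI).
Qed.

End Main2.

Section Main3.
Variable R : comUnitRingType.
Variables (m I : R -> Prop) (r : nat).
Hypothesis loc : is_local m.
Hypothesis d0 : dim0 m.
Hypothesis noeth : noetherian R.
Hypothesis ss : simple_socle m.
Hypothesis iI : is_ideal I.
Hypothesis Ir1 : eqI (powI I r.+1) (@zeroI R).

Let pI n := powI_ideal iI n.

Definition P4 := forall i, ((2 * i).+1 <= r)%N ->
         eqI (colon (@zeroI R) (powI I (r - i))) (powI I i.+1).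
Definition P5 := forall i, ((2 * i).+1 <= r)%N -> forall n : nat,
         has_length (powI I i.+1) (powI I i) n <->
         has_length (powI I (r - i).+1) (powI I (r - i)) n.

Lemma eqI_sym (A B : R -> Prop) : eqI A B -> eqI B A.
Proof. by move=> H x; split => /H. Qed.
Lemma eqI_trans (A B C : R -> Prop) : eqI A B -> eqI B C -> eqI A C.
Proof. by move=> H1 H2 x; split => [/H1 /H2|/H2 /H1]. Qed.
Lemma ann_eq (A B : R -> Prop) : eqI A B -> eqI (ann A) (ann B).
Proof. by move=> H x; split => Hx y Hy; apply: Hx; apply/H. Qed.



Lemma four_five : P4 -> P5.
Proof.
move=> H4 i hi.
have annann : forall X Y : R -> Prop, is_ideal X -> eqI (ann X) Y -> eqI (ann Y) X.
  move=> X Y iX H; apply: (eqI_trans _ (@ann_ann R m noeth loc d0 ss X iX)).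
  by apply: ann_eq; apply: eqI_sym.
have E1 : eqI (ann (powI I i.+1)) (powI I (r - i)) by apply: annann; [apply: pI | apply: H4].
have E2 : eqI (ann (powI I i)) (powI I (r - i).+1).
  case: i hi E1 => [|i'] hi E1.
    rewrite subn0; apply: eqI_trans (@ann_True R) _; exact: eqI_sym.
  have -> : ((r - i'.+1).+1 = r - i')%N by lia.
  apply: annann; first exact: pI.
  apply: H4; lia.
have sub : subI (powI I i.+1) (powI I i) by move=> x; apply: powI_S.
have [n0 hn0] := has_len_ex noeth loc d0 (pI _) (pI _) sub.
have hd := dual_eq noeth loc d0 ss (pI _) (pI _) sub hn0.
have hd' := has_len_ext hd E2 E1.
move=> n; split => h.
  by rewrite (has_len_uniq h hn0).
by rewrite (has_len_uniq h hd').
Qed.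

Lemma has_len_refl (X : R -> Prop) : is_ideal X -> has_length X X 0.
Proof.
move=> iX; split; first exact: chain_refl.
move=> k hk; have [n hn] := has_len_ex noeth loc d0 iX iX (fun x H => H).
have := has_len0 iX hn (fun x H => H) => n0.
by have := hn.2 k hk; rewrite n0.
Qed.

Lemma sub_S k : subI (powI I k.+1) (powI I k). Proof. by move=> x; apply: powI_S. Qed.

Definition lenI k := sval (constructive_indefinite_description _ (has_len_ex noeth loc d0 (pI k.+1) (pI k) (@sub_S k))).
Lemma lenIP k : has_length (powI I k.+1) (powI I k) (lenI k).
Proof. exact: svalP (constructive_indefinite_description _ (has_len_ex noeth loc d0 (pI k.+1) (pI k) (@sub_S k))). Qed.

Lemma tele a t : has_length (powI I (a + t)) (powI I a) (\sum_(k < t) lenI (a + k))%N.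
Proof.
elim: t => [|t IH]; first by rewrite addn0 big_ord0; apply: has_len_refl.
rewrite big_ord_recr /= [(_ + lenI _)%N]addnC.
have s1 : subI (powI I (a + t.+1)) (powI I (a + t)) by rewrite addnS; apply: sub_S.
have s2 : subI (powI I (a + t)) (powI I a) by move=> x; apply: powI_le; apply: leq_addr.
apply: (has_len_add (pI _) (pI _) (pI _) s1 s2) => //.
by rewrite addnS; apply: lenIP.
Qed.

Lemma five_three : P5 -> P3 I r.
Proof.
move=> H5.
have sym : forall k, (k <= r)%N -> lenI k = lenI (r - k).
  move=> k kr.
  case: (leqP (2 * k).+1 r) => h1.
    exact: (has_len_uniq (lenIP k) ((H5 k h1 _).2 (lenIP (r - k)))).
  case: (leqP (2 * (r - k)).+1 r) => h2.
    have := (H5 _ h2 (lenI (r - k))).1 (lenIP _); rewrite subKn // => h.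
    exact: has_len_uniq (lenIP k) h.
  have -> : (r - k)%N = k by lia.
  done.
move=> i ir x; split; last first.
  move=> Px y Py; apply/Ir1.
  have := powI_mul iI Px Py; rewrite addSn subnKC //; exact: ltnW.
set X := ann (powI I (r - i)).
have iX : is_ideal X by apply: ann_ideal.
have sX : subI (powI I i.+1) X.
  move=> z Pz y Py; apply/Ir1; have := powI_mul iI Pz Py; rewrite addSn subnKC //; exact: ltnW.
have hT := tele 0 (r - i).
have hT' := dual_eq noeth loc d0 ss (pI _) (pI 0) (fun x _ => Logic.I) hT.
have hT'' := has_len_ext hT' (@ann_True R) (ann_eq (fun y => (iff_refl (powI I (0 + (r - i)) y)))).
have hT2 := tele i.+1 (r - i).
have E : (i.+1 + (r - i) = r.+1)%N by lia.
rewrite E in hT2.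
have hT2' := has_len_ext hT2 Ir1 (fun y => iff_refl _).
have [e he] := has_len_ex noeth loc d0 (pI i.+1) iX sX.
have hs := has_len_add (@ideal_zero R) (pI _) iX (fun y (H : zeroI y) => eq_ind_r _ (id0 (pI i.+1)) H) sX hT2' he.
have hu := has_len_uniq hs hT''.
have Esum : (\sum_(k < r - i) lenI (0 + k) = \sum_(k < r - i) lenI (i.+1 + k))%N.
  rewrite [RHS](reindex_inj rev_ord_inj) /=; apply: eq_bigr => k _.
  have kr : (k < r - i)%N := ltn_ord k.
  rewrite add0n (sym k) ?(leq_trans (ltnW kr)) ?leq_subr //; congr lenI; lia.
have e0 : e = 0%N by move: hu; rewrite -Esum; lia.
rewrite e0 in he; exact: has_len_0 he x.
Qed.

End Main3.

Theorem theorem3p1 (R : comUnitRingType) (m I : R -> Prop) (r : nat) :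
  Gorenstein0 m -> is_ideal I -> subI I m ->
  (exists x, powI I r x /\ x <> 0) -> eqI (powI I r.+1) (@zeroI R) ->
  [<-> G_Gorenstein m I;
       forall i, (i < r)%N -> Soc_deg_zero m I i;
       forall i, (i < r)%N ->
         eqI (colon (@zeroI R) (powI I (r - i))) (powI I i.+1);
       forall i, ((2 * i).+1 <= r)%N ->
         eqI (colon (@zeroI R) (powI I (r - i))) (powI I i.+1);
       forall i, ((2 * i).+1 <= r)%N -> forall n : nat,
         has_length (powI I i.+1) (powI I i) n <->
         has_length (powI I (r - i).+1) (powI I (r - i)) n;
       (forall i, (0 < i < r)%N ->
          eqI (colon (powI I r) (powI I (r - i))) (powI I i)) /\
       eqI (colon (@zeroI R) I) (powI I r);
       (forall i, (0 < i < r)%N ->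
          faithful_over (powI I i) (powI I (r - i)) (powI I r)) /\
       faithful_over (powI I r) I (@zeroI R)].
Proof.
move=> [loc [noeth [d0 ss]]] iI Im Hr Ir1.
tfae.
- by apply: one_two.
- by apply: two_three.
- by move=> H i hi; apply: H; lia.
- by apply: (four_five (m := m)).
- move=> H; apply: three_six => //; by apply: (five_three (m := m)).
- exact: six_seven.
move=> H; apply: three_one => //.
  exact: Hr.
apply: six_three => //; by apply: seven_six.
Qed.
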